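(* Let $U=(u_1,\dots,u_n)$ and $V=(v_1,\dots,v_n)$ be complex vectors of the same dimension $n$, let $A=(a_1,\dots,a_{n'})$ be a complex vector, and set $R=(V,A)$, $W=(U,A)$ (vectors of dimension $N=n+n'$). Let $p_1,\dots,p_N:\mathbb C\to\mathbb C$ and $\mathcal G(\alpha_1,\dots,\alpha_N)=\det[p_i(\alpha_j)]_{i,j=1}^N/\det[\alpha_j^{i-1}]_{i,j=1}^N$. Assume the components of $R$ are distinct, the components of $W$ are distinct, and $\mathcal G(R)\ne0$. Then $$\frac{\mathcal G(W)}{\mathcal G(R)}=(-1)^{\binom n2}\det\Big[\frac{\mathcal G(R^{i,j})}{\mathcal G(R)(u_j-v_i)}\Big]_{i,j=1}^n\frac{\Delta(U;V)}{\Delta(U)\Delta(V)},$$ where $R^{i,j}$ is the vector $R$ with the component $v_i$ replaced by $u_j$.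
   Context: $\Delta(U)=\prod_{1\le i<j\le n}(u_j-u_i)$ and $\Delta(U;V)=\prod_{i=1}^n\prod_{j=1}^n(u_i-v_j)$. *)

(* Defs.v *)
From HB Require Import structures.
From mathcomp Require Import all_boot all_order all_algebra.
From mathcomp Require Import reals.
From mathcomp.real_closed Require Import complex.
Set Implicit Arguments. Unset Strict Implicit. Unset Printing Implicit Defensive.
Import Order.TTheory GRing.Theory Num.Theory.
Local Open Scope ring_scope.
Local Open Scope complex_scope.

Definition cplx (R : realType) : fieldType := R[i].

Section Defs.
Variable F : fieldType.

Definition Vdelta (n : nat) (U : 'I_n -> F) : F :=
  \prod_(i < n) \prod_(j < n | (i < j)%N) (U j - U i).

Definition Vdelta2 (n : nat) (U V : 'I_n -> F) : F :=
  \prod_(i < n) \prod_(j < n) (U i - V j).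

(* G(alpha) = det[p_i(alpha_j)] / det[alpha_j^(i-1)] (indices from 0 here) *)
Definition Gfun (N : nat) (p : 'I_N -> F -> F) (alpha : 'I_N -> F) : F :=
  \det (\matrix_(i < N, j < N) p i (alpha j)) /
  \det (\matrix_(i < N, j < N) alpha j ^+ i).

Definition vcat (n n' : nat) (X : 'I_n -> F) (A : 'I_n' -> F) : 'I_(n + n') -> F :=
  fun k => match split k with inl i => X i | inr j => A j end.

Definition vrepl (n : nat) (V : 'I_n -> F) (i : 'I_n) (x : F) : 'I_n -> F :=
  fun k => if k == i then x else V k.

End Defs.

(* Main.v *)
Require Import Defs.
From HB Require Import structures.
From mathcomp Require Import all_boot all_order all_algebra.
From mathcomp Require Import reals.
From mathcomp.real_closed Require Import complex.
From mathcomp Require Import ring.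
Import Order.TTheory GRing.Theory Num.Theory.
Local Open Scope ring_scope.

Set Implicit Arguments. Unset Strict Implicit. Unset Printing Implicit Defensive.

Section Aux.
Variable F : fieldType.

Lemma vcatL n n' (X : 'I_n -> F) (A : 'I_n' -> F) i : vcat X A (lshift n' i) = X i.
Proof. by rewrite /vcat (unsplitK (inl _ i)). Qed.
Lemma vcatR n n' (X : 'I_n -> F) (A : 'I_n' -> F) i : vcat X A (rshift n i) = A i.
Proof. by rewrite /vcat (unsplitK (inr _ i)). Qed.

Lemma VdeltaE N (a : 'I_N -> F) : \det (\matrix_(i < N, j < N) a j ^+ i) = Vdelta a.
Proof.
have := det_Vandermonde (\row_j a j); rewrite /Vandermonde /Vdelta.
have -> : \matrix_(i < N, j < N) (\row_j a j) 0 j ^+ i = \matrix_(i < N, j < N) a j ^+ i.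
  by apply/matrixP => i j; rewrite !mxE.
by move=> ->; apply: eq_bigr => i _; apply: eq_bigr => j _; rewrite !mxE.
Qed.

Lemma Vdelta_cat n n' (X : 'I_n -> F) (A : 'I_n' -> F) :
  Vdelta (vcat X A) = Vdelta X * Vdelta A * \prod_(i < n) \prod_(l < n') (A l - X i).
Proof.
rewrite /Vdelta big_split_ord /=.
have -> : \prod_(i < n) \prod_(j < n + n' | (lshift n' i < j)%N) (vcat X A j - vcat X A (lshift n' i))
   = \prod_(i < n) \prod_(j < n | (i < j)%N) (X j - X i) * \prod_(i < n) \prod_(l < n') (A l - X i).
  rewrite -big_split /=; apply: eq_bigr => i _; rewrite big_split_ord /=.
  congr (_ * _); first by apply: eq_bigr => j _; rewrite !vcatL.
  rewrite big_mkcond /=; apply: eq_bigr => l _.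
  by rewrite vcatL vcatR (@ltn_addr _ _ _ (ltn_ord i)).
have -> : \prod_(i < n') \prod_(j < n + n' | (rshift n i < j)%N) (vcat X A j - vcat X A (rshift n i))
   = \prod_(i < n') \prod_(j < n' | (i < j)%N) (A j - A i).
  apply: eq_bigr => i _; rewrite big_split_ord /=.
  rewrite [X in X * _]big_pred0 ?mul1r; last first.
    by move=> k /=; apply/negbTE; rewrite -leqNgt (leq_trans (ltnW (ltn_ord k))) // leq_addr.
  by apply: eq_big => [j|j _]; rewrite ?ltn_add2l // !vcatR.
by rewrite mulrAC.
Qed.

Lemma Vdelta_split N (b : 'I_N -> F) (i : 'I_N) :
 Vdelta b = (\prod_(a : 'I_N | a != i) \prod_(c : 'I_N | (a < c)%N && (c != i)) (b c - b a)) *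
   \prod_(c : 'I_N | c != i) (if (i < c)%N then b c - b i else b i - b c).
Proof.
rewrite /Vdelta (bigD1 i) //=.
under [X in _ * X = _]eq_bigr => a ai do rewrite big_mkcond (bigD1 i) //=.
rewrite big_split /= mulrCA mulrA mulrC; congr (_ * _).
  by apply: eq_bigr => a _; rewrite big_mkcondl.
rewrite mulrC big_mkcond (bigD1 i) //= ltnn mul1r -big_split /=.
apply: eq_bigr => c ci; case: ltngtP => h.
- by rewrite mulr1.
- by rewrite mul1r.
- by move: ci; rewrite (val_inj h) eqxx.
Qed.

Lemma Vdelta_repl N (a b : 'I_N -> F) (i : 'I_N) : (forall k, k != i -> b k = a k) ->
 Vdelta b * \prod_(c : 'I_N | c != i) (a i - a c) = Vdelta a * \prod_(c : 'I_N | c != i) (b i - a c).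
Proof.
move=> H; rewrite !(Vdelta_split _ i).
have Wf : forall g : 'I_N -> F, \prod_(c : 'I_N | c != i) (if (i < c)%N then g c - g i else g i - g c)
   = \prod_(c : 'I_N | c != i) (if (i < c)%N then -1 else 1) * \prod_(c : 'I_N | c != i) (g i - g c).
  move=> g; rewrite -big_split; apply: eq_bigr => c _; case: (i < c)%N => /=.
    by rewrite mulN1r opprB.
  by rewrite mul1r.
have -> : \prod_(a0 : 'I_N | a0 != i) \prod_(c : 'I_N | (a0 < c)%N && (c != i)) (b c - b a0)
   = \prod_(a0 : 'I_N | a0 != i) \prod_(c : 'I_N | (a0 < c)%N && (c != i)) (a c - a a0).
  apply: eq_bigr => a0 a0i; apply: eq_bigr => c /andP[_ ci]; by rewrite (H c ci) (H a0 a0i).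
rewrite !Wf.
have -> : \prod_(c : 'I_N | c != i) (b i - b c) = \prod_(c : 'I_N | c != i) (b i - a c).
  by apply: eq_bigr => c ci; rewrite (H c ci).
ring.
Qed.

Lemma sign_pairs n : \prod_(i < n) \prod_(k < n | (i < k)%N) (-1 : F) = (-1) ^+ 'C(n, 2).
Proof.
elim: n => [|n IH]; first by rewrite big_ord0.
rewrite big_ord_recl big_mkcond big_ord_recl /= mul1r.
rewrite (eq_bigr (fun _ => -1)) // prodr_const card_ord.
have -> : \prod_(i < n) \prod_(k < n.+1 | (bump 0 i < k)%N) (-1:F) = \prod_(i < n) \prod_(k < n | (i < k)%N) (-1:F).
  apply: eq_bigr => i _; rewrite big_mkcond big_ord_recl /= [RHS]big_mkcond mul1r.
  by apply: eq_bigr => k _; rewrite /bump /= !add1n ltnS.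
by rewrite IH -exprD binS bin1 addnC.
Qed.

Lemma prod_neq_sq n (V : 'I_n -> F) :
  \prod_i \prod_(k : 'I_n | k != i) (V i - V k) = (-1) ^+ 'C(n,2) * Vdelta V ^+ 2.
Proof.
have E : forall i : 'I_n, \prod_(k : 'I_n | k != i) (V i - V k) =
   \prod_(k : 'I_n | (i < k)%N) (V i - V k) * \prod_(k : 'I_n | (k < i)%N) (V i - V k).
  move=> i; rewrite (bigID (fun k : 'I_n => (i < k)%N)) /=; congr (_ * _); apply: eq_bigl => k.
    by rewrite -(inj_eq val_inj) /= neq_ltn; case: ltngtP.
  by rewrite -(inj_eq val_inj) /= neq_ltn; case: ltngtP.
rewrite (eq_bigr _ (fun i _ => E i)) big_split /=.
have -> : \prod_(i < n) \prod_(k : 'I_n | (k < i)%N) (V i - V k) = Vdelta V.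
  rewrite /Vdelta; under eq_bigr do rewrite big_mkcond.
  rewrite exchange_big; apply: eq_bigr => i _; by rewrite [RHS]big_mkcond.
have -> : \prod_(i < n) \prod_(k : 'I_n | (i < k)%N) (V i - V k) = (-1) ^+ 'C(n,2) * Vdelta V.
  rewrite -sign_pairs /Vdelta -big_split; apply: eq_bigr => i _; rewrite -big_split.
  by apply: eq_bigr => k _; rewrite /= mulN1r opprB.
by rewrite expr2 mulrA.
Qed.


Lemma det_col_repl N (M : 'M[F]_N) j0 (y : 'I_N -> F) :
  \det (\matrix_(k, m) if m == j0 then y k else M k m) = \sum_k y k * cofactor M k j0.
Proof.
rewrite (expand_det_col _ j0); apply: eq_bigr => k _; rewrite mxE eqxx; congr (_ * _).
rewrite /cofactor; congr (_ * _); congr (\det _); apply/matrixP => a b.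
by rewrite !mxE eq_sym (negbTE (neq_lift _ _)).
Qed.

Lemma invmxE' N (B : 'M[F]_N) i j : B \in unitmx -> invmx B i j = (\det B)^-1 * cofactor B j i.
Proof. by move=> uB; rewrite /invmx uB !mxE. Qed.

Lemma Dm_cat n n' (p : 'I_(n+n') -> F -> F) (U V : 'I_n -> F) (A : 'I_n' -> F)
  (M : 'M[F]_(n + n')) : M = \matrix_(k, m) p k (vcat V A m) ->
  \det M != 0 ->
  \det (\matrix_(k, m) p k (vcat U A m)) = \det M *
    \det (\matrix_(i, j) (\det (\matrix_(k, m) p k (vcat (vrepl V i (U j)) A m)) / \det M)).
Proof.
move=> HM dM.
have uM : M \in unitmx by rewrite unitmxE unitfE.
set PW := \matrix_(k,m) p k (vcat U A m).
set C := invmx M *m PW.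
have ePW : PW = M *m C by rewrite /C mulmxA mulmxV // mul1mx.
have Crs : forall k l, C k (rshift n l) = (1%:M : 'M[F]_(n+n')) k (rshift n l).
  move=> k l; rewrite /C -(mulVmx uM) !mxE; apply: eq_bigr => t _.
  by rewrite /PW HM !mxE !vcatR.
have Cur : ursubmx C = 0 by apply/matrixP => i l; rewrite mxE mxE Crs !mxE eq_lrshift.
have Cdr : drsubmx C = 1%:M by apply/matrixP => i l; rewrite mxE mxE Crs !mxE eq_rshift.
have dC : \det C = \det (ulsubmx C).
  by rewrite -[C in LHS]submxK Cur Cdr det_lblock det1 mulr1.
rewrite ePW det_mulmx dC; congr (_ * _); congr (\det _); apply/matrixP => i j.
rewrite [RHS]mxE.
have -> : \matrix_(k,m) p k (vcat (vrepl V i (U j)) A m) =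
          \matrix_(k,m) if m == lshift n' i then p k (U j) else M k m.
  apply/matrixP => k m; rewrite HM !mxE; case: (split_ordP m) => a ->.
    by rewrite !vcatL eq_lshift /vrepl; case: (a == i).
  by rewrite !vcatR eq_rlshift.
rewrite det_col_repl !mxE /C mulr_suml; apply: eq_bigr => t _.
rewrite invmxE' // /PW !mxE vcatL.
ring.
Qed.


Lemma GfunE N (p : 'I_N -> F -> F) a :
  Gfun p a = \det (\matrix_(k, m) p k (a m)) / Vdelta a.
Proof. by rewrite /Gfun VdeltaE. Qed.

Lemma Vdelta_neq0 N (a : 'I_N -> F) : injective a -> Vdelta a != 0.
Proof.
move=> ia; apply/prodf_neq0 => i _; apply/prodf_neq0 => j ij; rewrite subr_eq0.
by apply: contraTneq ij => /ia ->; rewrite ltnn.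
Qed.

Lemma vcat_repl n n' (V : 'I_n -> F) (A : 'I_n' -> F) i x k :
  vcat (vrepl V i x) A k = if k == lshift n' i then x else vcat V A k.
Proof.
case: (split_ordP k) => a ->.
  by rewrite !vcatL eq_lshift /vrepl; case: (a == i).
by rewrite !vcatR eq_rlshift.
Qed.

Lemma sgnX n n' (X : 'I_n -> F) (A : 'I_n' -> F) :
  \prod_(i < n) \prod_(l < n') (A l - X i) = (-1) ^+ (n * n') * \prod_(i < n) \prod_(l < n') (X i - A l).
Proof.
have -> : \prod_(i < n) \prod_(l < n') (A l - X i) = \prod_(i < n) ((-1) ^+ n' * \prod_(l < n') (X i - A l)).
  apply: eq_bigr => i _.
  rewrite -[n' in (-1) ^+ n']card_ord -prodr_const -big_split; apply: eq_bigr => l _ /=.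
  by rewrite mulN1r opprB.
by rewrite big_split /= prodr_const card_ord -exprM mulnC.
Qed.

Lemma det_diag3 n (a b : 'I_n -> F) (c : 'M[F]_n) :
  \det (\matrix_(i, j) (a i * c i j * b j)) = \prod_i a i * \det c * \prod_j b j.
Proof.
have -> : \matrix_(i, j) (a i * c i j * b j) = diag_mx (\row_i a i) *m c *m diag_mx (\row_j b j).
  by apply/matrixP => i j; rewrite mul_mx_diag mul_diag_mx !mxE.
by rewrite !det_mulmx !det_diag; congr (_ * _ * _); apply: eq_bigr => i _; rewrite mxE.
Qed.


Theorem main_gen (n n' : nat) (U V : 'I_n -> F) (A : 'I_n' -> F)
  (p : 'I_(n + n') -> F -> F) :
  injective (vcat V A) ->
  injective (vcat U A) ->
  Gfun p (vcat V A) != 0 ->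
  (forall i j : 'I_n, U j != V i) ->
  Gfun p (vcat U A) / Gfun p (vcat V A) =
  (-1) ^+ 'C(n, 2) *
  \det (\matrix_(i < n, j < n)
          (Gfun p (vcat (vrepl V i (U j)) A) /
           (Gfun p (vcat V A) * (U j - V i)))) *
  (Vdelta2 U V / (Vdelta U * Vdelta V)).
Proof.
move=> injR injW hG hUV.
set DR := \det (\matrix_(k, m) p k (vcat V A m)).
have [dR0 dVR0] : DR != 0 /\ Vdelta (vcat V A) != 0.
  by move: hG; rewrite GfunE mulf_eq0 invr_eq0 negb_or => /andP.
have dVW0 := Vdelta_neq0 injW.
set T := fun (i : 'I_n) y => \prod_(b | b != lshift n' i) (y - vcat V A b).
set P := fun y => \prod_b (y - vcat V A b).
have PU0 : forall j, P (U j) != 0.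
  move=> j; apply/prodf_neq0 => b _; rewrite subr_eq0; case: (split_ordP b) => a ->.
    by rewrite vcatL; apply: hUV.
  rewrite vcatR -(vcatL U A) -(vcatR U A); apply/eqP => /injW /eqP.
  by rewrite eq_lrshift.
have PT : forall i j, P (U j) = (U j - V i) * T i (U j).
  by move=> i j; rewrite /P (bigD1 (lshift n' i)) //= vcatL.
have TV0 : forall i, T i (V i) != 0.
  move=> i; apply/prodf_neq0 => b bi; rewrite subr_eq0 -(vcatL V A).
  by apply: contra bi => /eqP /injR ->.
set c := \matrix_(i, j) (\det (\matrix_(k, m) p k (vcat (vrepl V i (U j)) A m)) / DR).
have entry : forall i j, Gfun p (vcat (vrepl V i (U j)) A) / (Gfun p (vcat V A) * (U j - V i))
     = T i (V i) * c i j * (P (U j))^-1.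
  move=> i j.
  have H : forall k, k != lshift n' i -> vcat (vrepl V i (U j)) A k = vcat V A k.
    by move=> k kn; rewrite vcat_repl (negbTE kn).
  have e : Vdelta (vcat (vrepl V i (U j)) A) * T i (V i) = Vdelta (vcat V A) * T i (U j).
    by have := Vdelta_repl H; rewrite vcatL vcat_repl eqxx.
  have uv : U j - V i != 0 by rewrite subr_eq0 hUV.
  have TU0 : T i (U j) != 0 by move: (PU0 j); rewrite (PT i j) mulf_eq0 negb_or => /andP[].
  have e' : Vdelta (vcat (vrepl V i (U j)) A) = Vdelta (vcat V A) * T i (U j) / T i (V i).
    by rewrite -e mulfK.
  rewrite !GfunE e' (PT i j) /c mxE.
  rewrite -/DR; have tv0 := TV0 i; move: tv0 TU0 dR0 dVR0 uv.
  generalize (T i (U j)) (T i (V i)) DR (Vdelta (vcat V A)) (U j - V i) (\det (\matrix_(k, m) p k (vcat (vrepl V i (U j)) A m))) => a1 a2 a3 a4 a5 a6 h1 h2 h3 h4 h5.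
by field; rewrite h1 h2 h3 h4 h5.
have -> : \det (\matrix_(i, j) (Gfun p (vcat (vrepl V i (U j)) A) / (Gfun p (vcat V A) * (U j - V i))))
   = \prod_i T i (V i) * \det c * \prod_j (P (U j))^-1.
  rewrite -det_diag3; congr (\det _).
  by apply/matrixP => i j; rewrite mxE [RHS]mxE; exact: entry.
have DW : \det (\matrix_(k,m) p k (vcat U A m)) = DR * \det c := Dm_cat U (erefl _) dR0.
set YV := \prod_(i < n) \prod_(l < n') (V i - A l).
set YU := \prod_(i < n) \prod_(l < n') (U i - A l).
have hTV : \prod_i T i (V i) = (-1) ^+ 'C(n, 2) * Vdelta V ^+ 2 * YV.
  rewrite -prod_neq_sq /YV -big_split; apply: eq_bigr => i _; rewrite /T big_split_ord /=.
  congr (_ * _).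
    by apply: eq_big => [k|k _]; [rewrite eq_lshift | rewrite vcatL].
  by apply: eq_big => [l|l _]; [rewrite eq_rlshift | rewrite vcatR].
have hPU : \prod_j P (U j) = Vdelta2 U V * YU.
  rewrite /Vdelta2 /YU -big_split; apply: eq_bigr => j _; rewrite /P big_split_ord /=.
  congr (_ * _).
    by apply: eq_bigr => k _; rewrite vcatL.
  by apply: eq_bigr => l _; rewrite vcatR.
rewrite prodfV hTV hPU !GfunE DW.
rewrite Vdelta_cat sgnX -/YV in dVR0 *.
rewrite Vdelta_cat sgnX -/YU in dVW0 *.
have dUV : Vdelta2 U V != 0.
  by apply/prodf_neq0 => i _; apply/prodf_neq0 => j _; rewrite subr_eq0.
move: dVR0 dVW0; rewrite !mulf_eq0 !negb_or => /andP[/andP[dV dA] /andP[ds dYV]] /andP[/andP[dU _] /andP[_ dYU]].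
set sC := (-1) ^+ 'C(n, 2).
have sCC : sC * sC = 1 by rewrite -expr2 /sC sqrr_sign.
rewrite !mulrA sCC mul1r.
rewrite -/DR; move: dR0 dU dA dV ds dYU dYV dUV.
generalize DR (\det c) (Vdelta U) (Vdelta A) (Vdelta V) ((-1) ^+ (n * n') : F) YU YV (Vdelta2 U V).
move=> a1 a2 a3 a4 a5 a6 a7 a8 a9 h1 h2 h3 h4 h5 h6 h7 h8.
by field; rewrite h1 h2 h3 h4 h5 h6 h7 h8.
Qed.

End Aux.

Unset Implicit Arguments.

Theorem lemma4p7 (R : realType) (n n' : nat)
  (U V : 'I_n -> cplx R) (A : 'I_n' -> cplx R)
  (p : 'I_(n + n') -> cplx R -> cplx R) :
  injective (vcat V A) ->
  injective (vcat U A) ->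
  Gfun p (vcat V A) != 0 ->
  (forall i j : 'I_n, U j != V i) ->
  Gfun p (vcat U A) / Gfun p (vcat V A) =
  (-1) ^+ 'C(n, 2) *
  \det (\matrix_(i < n, j < n)
          (Gfun p (vcat (vrepl V i (U j)) A) /
           (Gfun p (vcat V A) * (U j - V i)))) *
  (Vdelta2 U V / (Vdelta U * Vdelta V)).
Proof. exact: (@main_gen (cplx R) n n' U V A p). Qed.
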